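(* Let $(D,\theta)$ be a finite-dimensional division algebra with involution of the first kind over a field $F$, let $\lambda=\pm1$, and let $(V,h)$ be an even $\lambda$-hermitian space over $(D,\theta)$. Suppose that either $D\neq F$ or $\lambda\neq-1$. If $h$ is regular, then for every $F$-basis $\mathcal{B}$ of $\mathrm{Symd}_\lambda(D,\theta)$ the system of quadratic forms $q_{h,\mathcal{B}}$ is totally regular.
   Context: The field $F$ has arbitrary characteristic. An involution of the first kind on $D$ is an $F$-linear antiautomorphism of order $2$. $\mathrm{Symd}_\lambda(D,\theta)=\{x+\lambda\theta(x)\mid x\in D\}$. A $\lambda$-hermitian space $(V,h)$ consists of a finite-dimensional right $D$-vector space $V$ and a bi-additive map $h:V\times V\to D$ with $h(u\alpha,v\beta)=\theta(\alpha)h(u,v)\beta$ and $h(v,u)=\lambda\theta(h(u,v))$; $h$ is regular if no nonzero $v$ satisfies $h(v,w)=0$ for all $w\in V$, and even if $h(v,v)\in\mathrm{Symd}_\lambda(D,\theta)$ for all $v\in V$. For an $F$-basis $\mathcal{B}=\{u_1,\dots,u_n\}$ of $\mathrm{Symd}_\lambda(D,\theta)$ with dual basis $\pi_1,\dots,\pi_n$, $q_{h,\mathcal{B}}=(q^{u_1}_{h,\mathcal{B}},\dots,q^{u_n}_{h,\mathcal{B}}):V\to F^n$ with $q^{u_i}_{h,\mathcal{B}}(v)=\pi_i(h(v,v))$, where $V$ is viewed as an $F$-vector space; each component is a quadratic form over $F$. A quadratic form $q$ is regular if no nonzero $v$ satisfies $q(v+w)-q(v)-q(w)=0$ for all $w$;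 a system $(q_1,\dots,q_n)$ is totally regular if every $q_i$ is regular. *)

(* Defs.v *)
From HB Require Import structures.
From mathcomp Require Import all_boot all_order all_algebra all_field.
Set Implicit Arguments. Unset Strict Implicit. Unset Printing Implicit Defensive.
Import GRing.Theory.
Local Open Scope ring_scope.

Section Defs.
Variables (F : fieldType) (D : falgType F).

Definition division_algebra : Prop := forall x : D, x != 0 -> x \is a GRing.unit.

Definition involution_first_kind (theta : D -> D) : Prop :=
  [/\ forall x y : D, theta (x + y) = theta x + theta y,
      forall (c : F) (x : D), theta (c *: x) = c *: theta x,
      forall x y : D, theta (x * y) = theta y * theta x,
      theta 1 = 1
    & forall x : D, theta (theta x) = x].

Definition in_Symd (theta : D -> D) (lam : D) (x : D) : Prop :=
  exists y : D, x = y + lam * theta y.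

Definition right_Dspace (V : vectType F) (act : V -> D -> V) : Prop :=
  [/\ forall (u v : V) (a : D), act (u + v) a = act u a + act v a,
      forall (v : V) (a b : D), act v (a + b) = act v a + act v b,
      forall (v : V) (a b : D), act v (a * b) = act (act v a) b,
      forall v : V, act v 1 = v
    & forall (v : V) (c : F), act v (c%:A) = c *: v].

Definition hermitian_form (V : vectType F) (act : V -> D -> V)
    (theta : D -> D) (lam : D) (h : V -> V -> D) : Prop :=
  [/\ forall u u' v : V, h (u + u') v = h u v + h u' v,
      forall u v v' : V, h u (v + v') = h u v + h u v',
      forall (u v : V) (a b : D), h (act u a) (act v b) = theta a * h u v * b
    & forall u v : V, h v u = lam * theta (h u v)].

Definition hermitian_regular (V : vectType F) (h : V -> V -> D) : Prop :=
  forall v : V, (forall w : V, h v w = 0) -> v = 0.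

Definition hermitian_even (V : vectType F) (theta : D -> D) (lam : D)
    (h : V -> V -> D) : Prop :=
  forall v : V, in_Symd theta lam (h v v).

Definition Symd_basis (theta : D -> D) (lam : D) n (B : n.-tuple D) : Prop :=
  free B /\ (forall x : D, x \in <<B>>%VS <-> in_Symd theta lam x).

Definition qhB (V : vectType F) (h : V -> V -> D) n (B : n.-tuple D)
    (i : 'I_n) (v : V) : F := coord B i (h v v).

End Defs.

Definition qf_regular (F : fieldType) (V : vectType F) (q : V -> F) : Prop :=
  forall v : V, (forall w : V, q (v + w) - q v - q w = 0) -> v = 0.

Definition totally_regular (F : fieldType) (V : vectType F) n
    (qs : 'I_n -> V -> F) : Prop :=
  forall i : 'I_n, qf_regular (qs i).

(* Main.v *)
Require Import Defs.
From mathcomp Require Import all_boot all_order all_algebra all_field.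
From mathcomp Require Import ring.
Local Open Scope ring_scope.
Import GRing.Theory.

Theorem proposition4p1 (F : fieldType) (D : falgType F)
    (theta : D -> D) (lam : D) (V : vectType F) (act : V -> D -> V)
    (h : V -> V -> D) :
  division_algebra D ->
  involution_first_kind theta ->
  (lam = 1 \/ lam = -1) ->
  right_Dspace act ->
  hermitian_form act theta lam h ->
  hermitian_even theta lam h ->
  ((\dim (fullv : {vspace D}) != 1)%N \/ lam != -1) ->
  hermitian_regular h ->
  forall (n : nat) (B : n.-tuple D), Symd_basis theta lam B ->
  totally_regular (qhB h B).
Proof.
move=> Ddiv [_ _ _ th1 _] _ [_ _ _ act1 _] [hDl hDr hact hsym] _ _ hreg n B [Bfree BS] i v Hv.
apply: hreg => w0; apply/eqP; apply/negP => /negP d0.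
have [y Hy] : in_Symd theta lam (B`_i).
  by apply/BS; apply: memv_span; apply: mem_nth; rewrite size_tuple.
set d := h v w0 in d0.
have du : d \is a GRing.unit by apply: Ddiv.
set w := act w0 (d^-1 * y).
have hvw : h v w = y.
  by rewrite /w -{1}(act1 v) hact th1 mul1r -/d mulVKr.
have := Hv w.
rewrite /qhB hDl !hDr (hsym v w) hvw.
have -> : h v v + y + (lam * theta y + h w w) = h v v + h w w + B`_i.
  by rewrite Hy addrA -(addrA (h v v)) addrAC.
rewrite !raddfD /= coord_free // eqxx /=.
have -> : forall a b : F, a + b + 1 - a - b = 1 by move=> a b; ring.
by move=> /eqP; rewrite oner_eq0.
Qed.
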